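(* There is an absolute constant $C$ such that for every general ordinal setting with $n\ge2$ agents there is a randomized mechanism $\mathcal{M}$ that is a $C\log n$-rank-approximation mechanism, i.e. for every profile $\succ$ and every $i\in[m]$, $\mathbb{E}[\mathrm{rank}_i(\mathcal{M}(\succ);\succ)]\ge\mathrm{maxrank}_i(\succ)/(C\log n)$.
   Context: General ordinal setting: $n$ agents and $m$ outcomes; each agent has a strict total order $\succ_j$ on the outcomes. $\mathrm{rank}_i(o;\succ)$ is the number of agents having $o$ among their top $i$ outcomes, $\mathrm{maxrank}_i(\succ)=\max_o\mathrm{rank}_i(o;\succ)$. A randomized mechanism maps each profile to a probability distribution over outcomes; expectation is over its randomness. *)

(* Defs.v *)
From Stdlib Require Import Rdefinitions.
From HB Require Import structures.
From mathcomp Require Import all_boot all_order all_algebra all_fingroup.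
From mathcomp Require Import reals exp Rstruct.

Set Implicit Arguments. Unset Strict Implicit. Unset Printing Implicit Defensive.
Import Order.TTheory GRing.Theory Num.Theory.
Local Open Scope ring_scope.

(* Agent j's strict
   total order is encoded as the permutation [P j] of 'I_m listing the
   outcomes from best to worst: [P j k] is agent j's (k+1)-th favourite
   outcome (k is 0-indexed). *)
Definition profile (n m : nat) := 'I_n -> {perm 'I_m}.

Definition rank (n m : nat) (i : nat) (o : 'I_m) (P : profile n m) : nat :=
  #|[set j : 'I_n | [exists k : 'I_m, (nat_of_ord k < i)%N && (P j k == o)]]|.

Definition maxrank (n m : nat) (i : nat) (P : profile n m) : nat :=
  (\max_(o : 'I_m) rank i o P)%N.

Definition is_distr (m : nat) (p : 'I_m -> R) : Prop :=
  (forall o, 0 <= p o) /\ \sum_(o : 'I_m) p o = 1.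

Definition exp_rank (n m : nat) (i : nat) (p : 'I_m -> R) (P : profile n m) : R :=
  \sum_(o : 'I_m) p o * (rank i o P)%:R.

(* Main.v *)
Require Import Defs.
From Stdlib Require Import Rdefinitions.
From HB Require Import structures.
From mathcomp Require Import all_boot all_order all_algebra all_fingroup.
From mathcomp Require Import reals exp Rstruct.
From mathcomp Require Import ring lra.

Set Implicit Arguments. Unset Strict Implicit.
Import Order.TTheory GRing.Theory Num.Theory.
Local Open Scope ring_scope.

Definition cnd (n m : nat) (P : profile n m) (t : nat) (x : 'I_m * 'I_m) : bool :=
  (2 ^ t <= rank (val x.1).+1 x.2 P)%N.

Definition sel (n m : nat) (o0 : 'I_m) (P : profile n m) (t : nat) : 'I_m :=
  if [pick x | cnd P t x] is Some x0 then (arg_min x0 (cnd P t) (fun x => val x.1)).2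
  else o0.

Lemma rank_mono n m (P : profile n m) i j o : (i <= j)%N -> (rank i o P <= rank j o P)%N.
Proof.
move=> Hij; apply: subset_leq_card; apply/subsetP => x; rewrite !inE.
move=> /existsP[k /andP[Hk Hx]]; apply/existsP; exists k.
by rewrite Hx (leq_trans Hk Hij).
Qed.

Lemma rank_le n m (P : profile n m) i o : (rank i o P <= n)%N.
Proof. by apply: leq_trans (max_card _) _; rewrite card_ord. Qed.

Lemma sel_spec n m o0 (P : profile n m) t x : cnd P t x ->
  (2 ^ t <= rank (val x.1).+1 (sel o0 P t) P)%N.
Proof.
move=> Hx; rewrite /sel; case: pickP => [x0 Hx0|H]; last by rewrite H in Hx.
case: arg_minnP => // y Hy Hmin.
apply: leq_trans Hy _; apply: rank_mono; exact: Hmin.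
Qed.

Lemma maxrank_attained n m (P : profile n m) i : (0 < m)%N ->
  exists o, maxrank i P = rank i o P.
Proof.
move=> Hm; have Hc : (0 < #|'I_m|)%N by rewrite card_ord.
have [o Ho] := @bigop.eq_bigmax _ (fun o => rank i o P) Hc.
by exists o.
Qed.

Lemma maxrank_le n m (P : profile n m) i : (maxrank i P <= n)%N.
Proof. by apply/bigmax_leqP => o _; apply: rank_le. Qed.

Lemma ln_bound (n : nat) : (2 <= n)%N ->
  (trunc_log 2 n).+1%:R * ln (2%:R : R) <= 2 * ln (n%:R : R).
Proof.
move=> Hn.
have h2 : 0 < (2%:R : R) by [].
have hn : 0 < (n%:R : R) by rewrite ltr0n (leq_trans _ Hn).
have A : ln (2%:R : R) <= ln n%:R by rewrite ler_ln ?posrE // ler_nat.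
have B : (trunc_log 2 n)%:R * ln (2%:R : R) <= ln n%:R.
  rewrite mulr_natl -lnXn //.
  rewrite ler_ln ?posrE ?exprn_gt0 // -natrX ler_nat.
  by apply: trunc_logP => //; apply: leq_trans Hn.
rewrite -addn1 natrD mulrDl mul1r; lra.
Qed.

Lemma mix_id m K (s : nat -> 'I_m) (f : 'I_m -> R) :
  \sum_(o : 'I_m) (\sum_(t < K) ((o == s t)%:R / K%:R)) * f o
  = K%:R^-1 * \sum_(t < K) f (s t).
Proof.
under eq_bigr do rewrite mulr_suml.
rewrite exchange_big mulr_sumr; apply: eq_bigr => t _ /=.
rewrite (bigD1 (s t)) //= eqxx big1 ?addr0; first by rewrite mul1r mulrC.
by move=> o /negbTE ->; rewrite !mul0r.
Qed.

Theorem theorem16 :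
  exists C : R, 0 < C /\
    forall (n m : nat), (2 <= n)%N -> (0 < m)%N ->
      exists M : profile n m -> 'I_m -> R,
        (forall P : profile n m, is_distr (M P)) /\
        (forall (P : profile n m) (i : nat), (1 <= i <= m)%N ->
           (maxrank i P)%:R / (C * ln (n%:R : R)) <= exp_rank i (M P) P).
Proof.
have l2 : 0 < ln (2%:R : R) by apply: ln_gt0; rewrite ltr1n.
exists (4 / ln (2%:R : R)); split; first by rewrite divr_gt0.
move=> n m Hn Hm; pose o0 := Ordinal Hm; pose K := (trunc_log 2 n).+1.
have K0 : 0 < (K%:R : R) by rewrite ltr0n.
exists (fun P o => \sum_(t < K) ((o == sel o0 P t)%:R / K%:R)); split.
  move=> P; split.
    by move=> o; apply: sumr_ge0 => t _; rewrite divr_ge0.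
  rewrite -(eq_bigr _ (fun o _ => mulr1 _)) mix_id sumr_const card_ord.
  by rewrite -[1 *+ K]/((K%:R : R)) mulVf // gt_eqF.
move=> P i /andP[i1 im].
rewrite /exp_rank mix_id.
have ln0 : 0 < ln (n%:R : R) by apply: ln_gt0; rewrite ltr1n.
have HL : 2 * K%:R <= 4 / ln (2%:R : R) * ln (n%:R : R).
  rewrite mulrAC ler_pdivlMr //; have := ln_bound Hn; rewrite -/K; lra.
have LP : 0 < 4 / ln (2%:R : R) * ln (n%:R : R) by rewrite mulr_gt0 ?divr_gt0.
rewrite -natr_sum.
set S := (\sum_(t < K) _)%N.
suff HS : (maxrank i P <= 2 * S)%N.
  rewrite ler_pdivrMr //; apply: le_trans (_ : (2 * S)%:R <= _).
    by rewrite ler_nat.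
  have -> : ((2 * S)%N%:R : R) = K%:R^-1 * S%:R * (2 * K%:R).
    by rewrite natrM; field; rewrite gt_eqF.
  by apply: ler_wpM2l => //; rewrite mulr_ge0 // invr_ge0 ltW.
have [->|M0] := posnP (maxrank i P); first by [].
pose t0 := trunc_log 2 (maxrank i P).
have H1 : (2 ^ t0 <= maxrank i P)%N by apply: trunc_logP.
have H2 : (maxrank i P < 2 ^ t0.+1)%N by apply: trunc_log_ltn.
have Ht0 : (t0 < K)%N by rewrite ltnS leq_trunc_log // maxrank_le.
have [os Hos] := maxrank_attained P i Hm.
have im' : (i.-1 < m)%N by rewrite prednK.
have Hc : cnd P t0 (Ordinal im', os) by rewrite /cnd /= prednK // -Hos.
have Hs := sel_spec o0 Hc; rewrite /= prednK // in Hs.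
have HSt : (rank i (sel o0 P t0) P <= S)%N.
  by rewrite /S (bigD1 (Ordinal Ht0)) //= leq_addr.
apply: (leq_trans (ltnW H2)); rewrite expnS leq_mul2l /=.
exact: leq_trans Hs HSt.
Qed.
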